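(* Let $\Gamma$ be a $\Bbbk$-algebra and $\sim$ an equivalence relation on $\mathrm{cfs}(\Gamma)$. If $0\to U\to V\to W\to0$ is a short exact sequence of $\Gamma$-modules and $V$ is a block module, then $U$ and $W$ are block modules and $\mathrm{Supp}(V)=\mathrm{Supp}(U)\cup\mathrm{Supp}(W)$.
   Context: $\mathrm{cfs}(\Gamma)$: maximal two-sided ideals $\mathfrak m$ of $\Gamma$ with $\dim\Gamma/\mathfrak m<\infty$. For a class $B$, $\mathcal W(B)=\{\mathfrak m_1\cdots\mathfrak m_k:k\ge0,\mathfrak m_i\in B\}$; for a $\Gamma$-module $V$, $V(B)=\{v:\mathfrak m v=0$ for some $\mathfrak m\in\mathcal W(B)\}$. $V$ is a block module if $V=\bigoplus_BV(B)$; $\mathrm{Supp}(V)=\{B:V(B)\neq0\}$. *)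

(* Defs.v *)
From Stdlib Require List.
From HB Require Import structures.
From mathcomp Require Import all_boot all_order all_algebra.
Set Implicit Arguments. Unset Strict Implicit. Unset Printing Implicit Defensive.
Import GRing.Theory.
Local Open Scope ring_scope.

Section BlockDefs.
Variables (k : fieldType) (G : algType k).

Definition twoSidedIdeal (I : G -> Prop) : Prop :=
  [/\ I 0,
      (forall x y, I x -> I y -> I (x + y)),
      (forall a x, I x -> I (a * x)) &
      (forall a x, I x -> I (x * a))].

Definition maxTwoSidedIdeal (I : G -> Prop) : Prop :=
  [/\ twoSidedIdeal I, ~ I 1 &
      forall J, twoSidedIdeal J -> (forall x, I x -> J x) ->
        (forall x, J x -> I x) \/ (forall x, J x)].

Definition finCodim (I : G -> Prop) : Prop :=
  exists (n : nat) (s : 'I_n -> G), forall x : G,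
    exists c : 'I_n -> k, I (x - \sum_(i < n) c i *: s i).

Definition cfs (I : G -> Prop) : Prop := maxTwoSidedIdeal I /\ finCodim I.

Definition equiv_on_cfs (eqv : (G -> Prop) -> (G -> Prop) -> Prop) : Prop :=
  [/\ (forall m, cfs m -> eqv m m),
      (forall m n, cfs m -> cfs n -> eqv m n -> eqv n m) &
      (forall m n p, cfs m -> cfs n -> cfs p -> eqv m n -> eqv n p -> eqv m p)].

Definition isClass (eqv : (G -> Prop) -> (G -> Prop) -> Prop)
    (B : (G -> Prop) -> Prop) : Prop :=
  exists m0, cfs m0 /\ forall m, B m <-> (cfs m /\ eqv m m0).

Definition sameClass (B B' : (G -> Prop) -> Prop) : Prop :=
  forall m, B m <-> B' m.

Definition idealMul (I J : G -> Prop) (x : G) : Prop :=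
  exists (n : nat) (a b : 'I_n -> G),
    (forall i, I (a i) /\ J (b i)) /\ x = \sum_(i < n) a i * b i.

(* m_1 ... m_k (the empty product is G itself) *)
Definition idealProd (ms : seq (G -> Prop)) : G -> Prop :=
  foldr idealMul (fun _ => True) ms.

(* V(B) = { v | m v = 0 for some m in W(B) } *)
Definition comp (V : lmodType G) (B : (G -> Prop) -> Prop) (v : V) : Prop :=
  exists ms : seq (G -> Prop), (forall m, List.In m ms -> B m) /\
    (forall a, idealProd ms a -> a *: v = 0).

(* V = (+)_B V(B), a direct sum over the equivalence classes B *)
Definition blockModule (eqv : (G -> Prop) -> (G -> Prop) -> Prop)
    (V : lmodType G) : Prop :=
  (forall v : V, exists (n : nat) (B : 'I_n -> ((G -> Prop) -> Prop)) (x : 'I_n -> V),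
      (forall i, isClass eqv (B i) /\ comp (B i) (x i)) /\ v = \sum_(i < n) x i) /\
  (forall (n : nat) (B : 'I_n -> ((G -> Prop) -> Prop)) (x : 'I_n -> V),
      (forall i, isClass eqv (B i) /\ comp (B i) (x i)) ->
      (forall i j, i != j -> ~ sameClass (B i) (B j)) ->
      \sum_(i < n) x i = 0 -> forall i, x i = 0).

Definition inSupp (V : lmodType G) (B : (G -> Prop) -> Prop) : Prop :=
  exists v : V, comp B v /\ v <> 0.

End BlockDefs.

(* Main.v *)
Require Import Defs.
From HB Require Import structures.
From mathcomp Require Import all_boot all_order all_algebra.
From Stdlib Require Import FunctionalExtensionality PropExtensionality Classical.
Set Implicit Arguments. Unset Strict Implicit. Unset Printing Implicit Defensive.
Import GRing.Theory.
Local Open Scope ring_scope.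

Section Aux.
Variables (k : fieldType) (G : algType k).
Implicit Types (I J m : G -> Prop) (ms : seq (G -> Prop)).

Definition comax I J := exists a b, I a /\ J b /\ a + b = 1.

Lemma idealMul_add I J x y : idealMul I J x -> idealMul I J y -> idealMul I J (x + y).
Proof.
case=> n1 [a1 [b1 [H1 ->]]]; case=> n2 [a2 [b2 [H2 ->]]].
exists (n1 + n2)%N, (fun i => match split i with inl j => a1 j | inr j => a2 j end),
  (fun i => match split i with inl j => b1 j | inr j => b2 j end).
split; first by move=> i; case: (split i) => j; [exact: H1|exact: H2].
rewrite big_split_ord /=; congr (_ + _); apply: eq_bigr => i _.
  by have := unsplitK (inl i : 'I_n1 + 'I_n2) => /= ->.
by have := unsplitK (inr i : 'I_n1 + 'I_n2) => /= ->.
Qed.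

Lemma ideal_sum I (HI : twoSidedIdeal I) n (F : 'I_n -> G) :
  (forall i, I (F i)) -> I (\sum_(i < n) F i).
Proof.
case: HI => H0 HD _ _ HF; apply: big_ind => //; by move=> i _; apply: HF.
Qed.

Lemma idealMul_ideal I J : (forall a x, I x -> I (a * x)) ->
  (forall a x, J x -> J (x * a)) -> twoSidedIdeal (idealMul I J).
Proof.
move=> HI HJ; split.
- exists 0%N, (fun _ => 0), (fun _ => 0); split; first by case.
  by rewrite big_ord0.
- exact: idealMul_add.
- move=> c x [n [a [b [H ->]]]]; exists n, (fun i => c * a i), b; split.
    by move=> i; case: (H i) => ? ?; split => //; apply: HI.
  by rewrite mulr_sumr; apply: eq_bigr => i _; rewrite mulrA.
- move=> c x [n [a [b [H ->]]]]; exists n, a, (fun i => b i * c); split.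
    by move=> i; case: (H i) => ? ?; split => //; apply: HJ.
  by rewrite mulr_suml; apply: eq_bigr => i _; rewrite mulrA.
Qed.

Lemma prod_ideal ms : (forall m, List.In m ms -> twoSidedIdeal m) ->
  twoSidedIdeal (idealProd ms).
Proof.
elim: ms => [|m ms IH] H /=; first by split.
apply: idealMul_ideal.
  by case: (H m (or_introl erefl)).
have := IH (fun m' Hm' => H m' (or_intror Hm')); by case.
Qed.

Lemma idealMul_subr I J x : twoSidedIdeal J -> idealMul I J x -> J x.
Proof.
move=> HJ [n [a [b [H ->]]]]; apply: ideal_sum => // i.
case: HJ => _ _ HL _; apply: HL; by case: (H i).
Qed.

Lemma idealMul_mono I J J' x : (forall y, J y -> J' y) ->
  idealMul I J x -> idealMul I J' x.
Proof.
move=> HJ [n [a [b [H ->]]]]; exists n, a, b; split => // i.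
by case: (H i) => ? ?; split => //; apply: HJ.
Qed.

Lemma prod_cat_l ms1 ms2 x : idealProd (ms1 ++ ms2) x -> idealProd ms1 x.
Proof.
elim: ms1 x => [|m ms IH] x //= H; apply: idealMul_mono H; exact: IH.
Qed.

Lemma prod_cat_r ms1 ms2 x : (forall m, List.In m (ms1 ++ ms2) -> twoSidedIdeal m) ->
  idealProd (ms1 ++ ms2) x -> idealProd ms2 x.
Proof.
elim: ms1 x => [|m ms IH] x //= H Hx.
apply: (IH _ (fun m' Hm' => H m' (or_intror Hm'))).
apply: idealMul_subr Hx; apply: prod_ideal => m' Hm'; apply: H; by right.
Qed.

Lemma comax_sym I J : comax I J -> comax J I.
Proof. by case=> a [b [? [? E]]]; exists b, a; rewrite addrC. Qed.

Lemma comax_mul I1 I2 J : twoSidedIdeal J -> comax I1 J -> comax I2 J ->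
  comax (idealMul I1 I2) J.
Proof.
move=> HJ [a1 [b1 [Ha1 [Hb1 E1]]]] [a2 [b2 [Ha2 [Hb2 E2]]]].
case: HJ => J0 JD JL JR.
exists (a1 * a2), (a1 * b2 + b1 * a2 + b1 * b2); split; last split.
- exists 1%N, (fun _ => a1), (fun _ => a2); split => //.
  by rewrite big_ord1.
- apply: (JD); last exact: JL.
  by apply: (JD); [apply: (JL) | apply: JR].
- have E : (a1 + b1) * (a2 + b2) = 1 by rewrite E1 E2 mulr1.
  rewrite mulrDl !mulrDr in E; rewrite -E; by rewrite !addrA.
Qed.

Lemma comax_prod ms J : twoSidedIdeal J -> (forall m, List.In m ms -> comax m J) ->
  comax (idealProd ms) J.
Proof.
move=> HJ; elim: ms => [|m ms IH] H /=.
  exists 1, 0; split => //; split; [by case: HJ | by rewrite addr0].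
apply: comax_mul => //; first exact: H (or_introl erefl).
apply: IH => m' Hm'; apply: H; by right.
Qed.

Lemma cfs_ideal m : cfs m -> twoSidedIdeal m.
Proof. by case=> [[]]. Qed.

Lemma comax_max m n : cfs m -> cfs n -> (forall x, m x <-> n x) \/ comax m n.
Proof.
move=> Hm Hn; have Im := cfs_ideal Hm; have In := cfs_ideal Hn.
case: Hm => [[_ Hm1 Hmax] _]; case: Hn => [[_ Hn1 Hnmax] _].
case: Im => m0 mD mL mR; case: In => n0 nD nL nR.
pose J := fun x => exists a b, m a /\ n b /\ x = a + b.
have HJ : twoSidedIdeal J.
  split.
  - by exists 0, 0; rewrite addr0.
  - move=> x y [a [b [ma [nb ->]]]] [a' [b' [ma' [nb' ->]]]].
    exists (a + a'), (b + b'); split; [exact: mD|split; [exact: nD|]].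
    by rewrite addrACA.
  - move=> c x [a [b [ma [nb ->]]]]; exists (c * a), (c * b).
    by rewrite mulrDr; split; [exact: mL|split; [exact: nL|]].
  - move=> c x [a [b [ma [nb ->]]]]; exists (a * c), (b * c).
    by rewrite mulrDl; split; [exact: (mR)|split; [exact: nR|]].
have mJ : forall x, m x -> J x by move=> x mx; exists x, 0; rewrite addr0.
case: (Hmax J HJ mJ) => [JM|Jall].
  have nm : forall x, n x -> m x.
    by move=> x nx; apply: JM; exists 0, x; rewrite add0r.
  case: (Hnmax m (And4 m0 mD mL mR) nm) => [mn|mall].
    by left => x; split; [apply: mn|apply: nm].
  by case: Hm1; apply: mall.
right; case: (Jall 1) => a [b [ma [nb e]]]; by exists a, b.
Qed.

Variable (eqv : (G -> Prop) -> (G -> Prop) -> Prop).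
Hypothesis Heqv : equiv_on_cfs eqv.

Lemma class_cfs B m : isClass eqv B -> B m -> cfs m.
Proof. by case=> m0 [_ H] /H []. Qed.

Lemma class_comax B C m n : isClass eqv B -> isClass eqv C -> ~ sameClass B C ->
  B m -> C n -> comax m n.
Proof.
move=> HB HC HBC Bm Cn.
case: (comax_max (class_cfs HB Bm) (class_cfs HC Cn)) => // Heq.
have mn : m = n.
  by apply: functional_extensionality => x; apply: propositional_extensionality.
subst n; case: HBC.
case: HB => m0 [c0 HB]; case: HC => m1 [c1 HC].
case: Heqv => _ Hsym Htr.
have cm := class_cfs (ex_intro _ m0 (conj c0 HB)) Bm.
have [_ e0] := (HB m).1 Bm; have [_ e1] := (HC m).1 Cn.
move=> p; rewrite HB HC; split; case=> cp ep; split => //.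
  apply: (Htr p m m1) => //; apply: (Htr p m0 m) => //; exact: Hsym.
apply: (Htr p m m0) => //; apply: (Htr p m1 m) => //; exact: Hsym.
Qed.

Section Mod.
Variable M : lmodType G.

Lemma comp_add B (HB : isClass eqv B) (v1 v2 : M) :
  Defs.comp B v1 -> Defs.comp B v2 -> Defs.comp B (v1 + v2).
Proof.
case=> ms1 [H1 A1] [ms2 [H2 A2]]; exists (ms1 ++ ms2); split.
  by move=> m Hm; case: (List.in_app_or _ _ _ Hm) => ?; [apply: H1|apply: H2].
have Hid : forall m, List.In m (ms1 ++ ms2) -> twoSidedIdeal m.
  move=> m Hm; case: (List.in_app_or _ _ _ Hm) => ?; apply: cfs_ideal; apply: (class_cfs HB);
   [exact: H1|exact: H2].
move=> a Ha; rewrite scalerDr A1 ?A2 ?addr0 //.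
  exact: prod_cat_r Ha.
exact: prod_cat_l Ha.
Qed.

Lemma comp0 B : Defs.comp B (0 : M).
Proof. by exists [::]; split => // a _; rewrite scaler0. Qed.

Lemma compN B (v : M) : Defs.comp B v -> Defs.comp B (- v).
Proof.
by case=> ms [H A]; exists ms; split => // a Ha; rewrite scalerN A ?oppr0.
Qed.

Lemma comp_same B C (v : M) : sameClass B C -> Defs.comp B v -> Defs.comp C v.
Proof.
by move=> HBC [ms [H A]]; exists ms; split => // m Hm; apply/HBC/H.
Qed.

Lemma comp_lin (M' : lmodType G) (h : {linear M -> M'}) B v :
  Defs.comp B v -> Defs.comp B (h v).
Proof.
case=> ms [H A]; exists ms; split => // a Ha.
by rewrite -linearZZ A // linear0.
Qed.

Lemma comp_sep B (HB : isClass eqv B) (w : M) (I : eqType) (r : seq I) (P : pred I)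
  (z : I -> M) : Defs.comp B w ->
  (forall j, P j -> exists C, isClass eqv C /\ Defs.comp C (z j) /\ ~ sameClass B C) ->
  w = \sum_(j <- r | P j) z j -> w = 0.
Proof.
case=> ms [Hms Aw] Hz Ew.
have Hmsid : twoSidedIdeal (idealProd ms).
  by apply: prod_ideal => m Hm; apply: cfs_ideal; apply: (class_cfs HB); apply: Hms.
have [a [b [Ha [E Hb]]]] : exists a b, idealProd ms a /\ a + b = 1 /\
    forall j, j \in r -> P j -> b *: z j = 0.
  have Hr : forall j, j \in r -> P j -> exists C, isClass eqv C /\ Defs.comp C (z j) /\ ~ sameClass B C.
    by move=> j _; apply: Hz.
  elim: (r) Hr => [|j0 s IH] Hr.
    by exists 0, 1; split; [case: Hmsid|split; [rewrite add0r|]].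
  have [a2 [b2 [Ha2 [E2 Hb2]]]] : exists a b, idealProd ms a /\ a + b = 1 /\
      forall j, j \in s -> P j -> b *: z j = 0.
    by apply: IH => j hj; apply: Hr; rewrite in_cons hj orbT.
  case Pj0 : (P j0); last first.
    exists a2, b2; split => //; split => // j; rewrite in_cons.
    case/orP => [/eqP -> | hj]; [by rewrite Pj0|exact: Hb2].
  have [C [HC [[ns [Hns Az]] HBC]]] := Hr j0 (mem_head _ _) Pj0.
  have Hnsid : twoSidedIdeal (idealProd ns).
    by apply: prod_ideal => m Hm; apply: cfs_ideal; apply: (class_cfs HC); apply: Hns.
  have [a1 [b1 [Ha1 [Hb1 E1]]]] : comax (idealProd ms) (idealProd ns).
    apply: comax_prod => // m Hm; apply: comax_sym; apply: comax_prod.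
      by apply: cfs_ideal; apply: (class_cfs HB); apply: Hms.
    move=> n Hn; apply: comax_sym; apply: (class_comax HB HC HBC); [exact: Hms|exact: Hns].
  exists (a2 + a1 * b2), (b1 * b2); split; last split.
  - case: Hmsid => _ mD _ mR; apply: (mD) => //; exact: (mR).
  - by rewrite -addrA -mulrDl E1 mul1r.
  - move=> j; rewrite in_cons; case/orP => [/eqP -> _ | hj Pj].
      by rewrite Az //; case: Hnsid => _ _ _ nR; apply: nR.
    by rewrite -scalerA Hb2 // scaler0.
have -> : w = b *: w by rewrite -{1}[w]scale1r -E scalerDl (Aw a Ha) add0r.
rewrite Ew scaler_sumr big_seq_cond big1 // => j /andP [hj Pj]; exact: Hb.
Qed.

Lemma indep n (B : 'I_n -> ((G -> Prop) -> Prop)) (x : 'I_n -> M) :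
  (forall i, isClass eqv (B i) /\ Defs.comp (B i) (x i)) ->
  (forall i j, i != j -> ~ sameClass (B i) (B j)) ->
  \sum_(i < n) x i = 0 -> forall i, x i = 0.
Proof.
move=> Hx Hd Hs i.
have [HBi Hxi] := Hx i.
apply: (comp_sep HBi Hxi (r := index_enum _) (P := predC1 i) (z := fun j => - x j)).
  move=> j /= Pj; exists (B j); have [? ?] := Hx j; split => //; split.
    exact: compN.
  by apply: Hd; rewrite eq_sym.
move: Hs; rewrite (bigD1 i) //= => /eqP; rewrite addr_eq0 => /eqP ->; by rewrite sumrN.
Qed.

Lemma regroup n (B : 'I_n -> ((G -> Prop) -> Prop)) (x : 'I_n -> M) :
  (forall i, isClass eqv (B i) /\ Defs.comp (B i) (x i)) ->
  exists (m : nat) (C : 'I_m -> ((G -> Prop) -> Prop)) (y : 'I_m -> M),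
   [/\ (forall j, isClass eqv (C j) /\ Defs.comp (C j) (y j)),
       (forall j j', j != j' -> ~ sameClass (C j) (C j')) &
       \sum_(i < n) x i = \sum_(j < m) y j].
Proof.
elim: n B x => [|n IH] B x Hx.
  exists 0%N, (fun _ _ => False), (fun _ => 0); split; try by case.
  by rewrite !big_ord0.
have [m [C [y [Hy Hd Es]]]] :=
  IH (fun i => B (lift ord_max i)) (fun i => x (lift ord_max i)) (fun i => Hx _).
have Esum : \sum_(i < n.+1) x i = \sum_(i < n) x (lift ord_max i) + x ord_max.
  rewrite big_ord_recr; congr (_ + _); apply: eq_bigr => i _; congr (x _); apply: val_inj => /=. by rewrite /bump leqNgt ltn_ord.
have [HBm Hxm] := Hx ord_max.
case: (classic (exists j, sameClass (C j) (B ord_max))) => [[j Hj] | Hn].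
  exists m, C, (fun j' => if j' == j then y j' + x ord_max else y j'); split => //.
  - move=> j'; case: eqP => [->|_]; last exact: Hy.
    have [? ?] := Hy j; split => //; apply: comp_add => //.
    by apply: comp_same Hxm => p; split => /Hj.
  - rewrite Esum Es (bigD1 j) //= [RHS](bigD1 j) //= eqxx addrAC; congr (_ + _).
    by apply: eq_bigr => j' /negbTE ->.
exists m.+1, (fun j => if unlift ord_max j is Some j' then C j' else B ord_max),
  (fun j => if unlift ord_max j is Some j' then y j' else x ord_max); split.
- by move=> j; case: (unliftP ord_max j) => [j' _|_] /=; [apply: Hy|].
- move=> j1 j2; case: (unliftP ord_max j1) => [j1' ->|->];
    case: (unliftP ord_max j2) => [j2' ->|->] /= hne.
  + apply: Hd; apply: contra hne => /eqP ->; exact: eqxx.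
  + by move=> HS; apply: Hn; exists j1'.
  + by move=> HS; apply: Hn; exists j2' => p; split => /HS.
  + by rewrite eqxx in hne.
- rewrite Esum Es big_ord_recr /= unlift_none; congr (_ + _).
  apply: eq_bigr => i _; have -> : widen_ord (leqnSn m) i = lift ord_max i.
    by apply: val_inj; rewrite /= /bump leqNgt ltn_ord.
  by rewrite liftK.
Qed.

End Mod.
End Aux.

Theorem mainTheorem7 (k : fieldType) (G : algType k)
    (eqv : (G -> Prop) -> (G -> Prop) -> Prop)
    (U V W : lmodType G) (f : {linear U -> V}) (g : {linear V -> W}) :
  equiv_on_cfs eqv ->
  injective f ->
  (forall w : W, exists v : V, g v = w) ->
  (forall v : V, g v = 0 <-> exists u : U, f u = v) ->
  blockModule eqv V ->
  [/\ blockModule eqv U, blockModule eqv W &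
      forall B, isClass eqv B ->
        (inSupp V B <-> inSupp U B \/ inSupp W B)].
Proof.
move=> Heqv finj gsurj gker [Vdec Vind].
have f0 : f 0 = 0 by rewrite linear0.
have comp_f : forall B u, Defs.comp B (f u) -> Defs.comp B u.
  move=> B u [ms [H A]]; exists ms; split => // a Ha.
  by apply: finj; rewrite linearZZ A // f0.
have gf : forall u, g (f u) = 0 by move=> u; apply/gker; exists u.
split.
- split; last exact: (indep Heqv).
  move=> u; have [n [B [x [Hx Es]]]] := Vdec (f u).
  have [m [C [y [Hy Hd Es']]]] := regroup Hx.
  have gy0 : forall j, g (y j) = 0.
    move=> j; have [HCj Hyj] := Hy j.
    apply: (comp_sep Heqv HCj (comp_lin g Hyj) (r := index_enum _) (P := predC1 j)
      (z := fun j' => - g (y j'))).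
      move=> j' /= Pj; exists (C j'); have [? ?] := Hy j'; split => //; split.
        by apply: compN; apply: comp_lin.
      by apply: Hd; rewrite eq_sym.
    have : \sum_(j' < m) g (y j') = 0 by rewrite -linear_sum -Es' -Es gf.
    rewrite (bigD1 j) //= => /eqP; rewrite addr_eq0 => /eqP ->; by rewrite sumrN.
  have [uu Huu] : exists uu : 'I_m -> U, forall j, f (uu j) = y j.
    by apply: (@fin_all_exists _ (fun _ => U) (fun j u => f u = y j)) => j; apply/gker.
  exists m, C, uu; split.
    move=> j; have [? ?] := Hy j; split => //; apply: comp_f; by rewrite Huu.
  apply: finj; rewrite linear_sum Es Es'; apply: eq_bigr => j _; by rewrite Huu.
- split; last exact: (indep Heqv).
  move=> w; have [v <-] := gsurj w; have [n [B [x [Hx Es]]]] := Vdec v.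
  exists n, B, (fun i => g (x i)); split.
    by move=> i; have [? ?] := Hx i; split => //; apply: comp_lin.
  by rewrite Es linear_sum.
move=> B HB; split.
  case=> v [Hv nv]; case: (eqVneq (g v) 0) => [gv0|gvn].
    left; have [u Hu] := (gker v).1 gv0; exists u; split.
      by apply: comp_f; rewrite Hu.
    by move=> u0; apply: nv; rewrite -Hu u0 f0.
  by right; exists (g v); split; [apply: comp_lin|apply/eqP].
case=> [[u [Hu nu]]|[w [Hw nw]]].
  exists (f u); split; first exact: comp_lin.
  by move=> fu0; apply: nu; apply: finj; rewrite fu0 f0.
have [v Ev] := gsurj w; have [n [B' [x [Hx Es]]]] := Vdec v.
have [m [C [y [Hy Hd Es']]]] := regroup Hx.
have Ew : w = \sum_(j < m) g (y j) by rewrite -Ev Es Es' linear_sum.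
case: (classic (exists j, sameClass B (C j))) => [[j Hj] | Hn]; last first.
  case: nw; apply: (comp_sep Heqv HB Hw (r := index_enum _) (P := predT)
    (z := fun j => g (y j))) => // j _.
  exists (C j); have [? ?] := Hy j; split => //; split; first exact: comp_lin.
  by move=> HS; apply: Hn; exists j.
have [HCj Hyj] := Hy j.
have HjB : sameClass (C j) B by move=> p; split => /Hj.
have wgy : w - g (y j) = 0.
  apply: (comp_sep Heqv HB _ (r := index_enum _) (P := predC1 j)
    (z := fun j' => g (y j'))).
  - apply: (comp_add HB); first exact: Hw; apply: compN; apply: comp_lin.
    exact: comp_same Hyj.
  - move=> j' /= Pj; exists (C j'); have [? ?] := Hy j'; split => //; split.
      exact: comp_lin.
    move=> HS; apply: (Hd j j'); first by rewrite eq_sym.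
    by move=> p; rewrite -HS; split => /Hj.
  by rewrite Ew (bigD1 j) //= addrAC subrr add0r.
exists (y j); split; first exact: comp_same Hyj.
move=> y0; apply: nw; move/subr0_eq: wgy => ->; by rewrite y0 linear0.
Qed.
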